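(* Let $K$ be a finite simplicial complex, $(f,g)\colon|K|\to\mathbb{R}^n\times\mathbb{R}^k$ continuous, and $\alpha>0$. Let $U:=\{x\in|K| : g_i(x)\le-\alpha\text{ for all }i=1,\dots,k\}$. Then every $\alpha$-perturbation of the system $f=0\wedge g\le0$ is satisfiable if and only if every $\alpha$-perturbation $h\colon U\to\mathbb{R}^n$ of $f|_U$ has a root in $U$.
   Context: All norms are max-norms: for a function $h$ on a set $D$ with values in some $\mathbb{R}^p$, $\|h\|:=\sup_{x\in D}\max_i|h_i(x)|$. An $\alpha$-perturbation of $f|_U$ is a continuous $h\colon U\to\mathbb{R}^n$ with $\|h-f|_U\|\le\alpha$. An $\alpha$-perturbation of the system $f=0\wedge g\le0$ is a system $\tilde f=0\wedge\tilde g\le0$ with continuous $\tilde f\colon|K|\to\mathbb{R}^n$, $\tilde g\colon|K|\to\mathbb{R}^k$, $\|\tilde f-f\|\le\alpha$, $\|\tilde g-g\|\le\alpha$; it is satisfiable if there is $x\in|K|$ with $\tilde f(x)=0$ and $\tilde g_i(x)\le0$ for all $i$. *)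

(* Defs.v *)
From HB Require Import structures.
From mathcomp Require Import all_boot all_order all_algebra.
From mathcomp Require Import all_classical all_reals all_analysis.
Set Implicit Arguments. Unset Strict Implicit. Unset Printing Implicit Defensive.
Import Order.TTheory GRing.Theory Num.Theory.
Import numFieldNormedType.Exports.
Local Open Scope classical_set_scope.
Local Open Scope ring_scope.

Definition is_simplicial_complex (N : nat) (K : {set {set 'I_N}}) : Prop :=
  (forall s : {set 'I_N}, s \in K -> s != finset.set0) /\
  (forall s t : {set 'I_N}, s \in K -> t \subset s -> t != finset.set0 -> t \in K).

(* Geometric realization |K| in R^N (vertex i = i-th standard basis vector):
   points with barycentric coordinates supported on a simplex of K. *)
Definition realization (R : realType) (N : nat) (K : {set {set 'I_N}})
  : set 'rV[R]_N :=
  [set x | (forall i, 0 <= x ord0 i) /\ \sum_(i < N) x ord0 i = 1 /\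
           exists2 s, s \in K & forall i, x ord0 i != 0 -> i \in s].

Definition max_dist_le (R : realType) (N m : nat) (D : set 'rV[R]_N)
  (h f : 'rV[R]_N -> 'rV[R]_m) (a : R) : Prop :=
  forall x, D x -> forall i, `|h x ord0 i - f x ord0 i| <= a.

Definition system_perturbation (R : realType) (N n k : nat)
  (K : {set {set 'I_N}}) (alpha : R)
  (f ft : 'rV[R]_N -> 'rV[R]_n) (g gt : 'rV[R]_N -> 'rV[R]_k) : Prop :=
  {within realization K, continuous ft} /\
  {within realization K, continuous gt} /\
  max_dist_le (realization K) ft f alpha /\
  max_dist_le (realization K) gt g alpha.

Definition satisfiable (R : realType) (N n k : nat) (K : {set {set 'I_N}})
  (ft : 'rV[R]_N -> 'rV[R]_n) (gt : 'rV[R]_N -> 'rV[R]_k) : Prop :=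
  exists2 x, realization K x & ft x = 0 /\ forall i, gt x ord0 i <= 0.

Definition Uset (R : realType) (N k : nat) (K : {set {set 'I_N}})
  (g : 'rV[R]_N -> 'rV[R]_k) (alpha : R) : set 'rV[R]_N :=
  [set x | realization K x /\ forall i, g x ord0 i <= - alpha].

Definition fun_perturbation (R : realType) (N n : nat) (U : set 'rV[R]_N)
  (alpha : R) (f h : 'rV[R]_N -> 'rV[R]_n) : Prop :=
  {within U, continuous h} /\ max_dist_le U h f alpha.

(* Main.v *)
Require Import Defs.
From HB Require Import structures.
From mathcomp Require Import all_boot all_order all_algebra.
From mathcomp Require Import all_classical all_reals all_analysis.
From mathcomp Require Import lra.
Import Order.TTheory GRing.Theory Num.Theory.
Import numFieldNormedType.Exports.
Local Open Scope classical_set_scope.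
Local Open Scope ring_scope.
Set Implicit Arguments. Unset Strict Implicit. Unset Printing Implicit Defensive.
Section Core.
Variables (R : realType) (N : nat) (U : set 'rV[R]_N) (v : 'rV[R]_N -> R) (alpha : R).
Hypothesis vb : forall a, U a -> -alpha <= v a <= alpha.
Hypothesis a0 : 0 < alpha.

Definition TT (m : R) x := [set t | t = alpha \/ exists2 a, U a & t = v a + m * `|x - a|].
Definition ee m x := inf (TT m x).

Lemma TT_lb m x : 0 <= m -> lbound (TT m x) (-alpha).
Proof.
move=> m0 t [->|[a Ua ->]]; first by rewrite (le_trans _ (ltW a0)) // oppr_le0 ltW.
have /andP[h _] := vb Ua; apply: (le_trans h); rewrite lerDl.
by apply: mulr_ge0.
Qed.

Lemma TT_hlb m x : 0 <= m -> has_lbound (TT m x).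
Proof. by move=> m0; exists (-alpha); exact: TT_lb. Qed.

Lemma TT_ne m x : nonempty (TT m x).
Proof. by exists alpha; left. Qed.

Lemma ee_le_alpha m x : 0 <= m -> ee m x <= alpha.
Proof. by move=> m0; apply: (ge_inf (TT_hlb x m0)); left. Qed.

Lemma ee_ge m x : 0 <= m -> -alpha <= ee m x.
Proof. by move=> m0; apply: lb_le_inf; [exact: TT_ne|exact: TT_lb]. Qed.

Lemma ee_le_v m x : 0 <= m -> U x -> ee m x <= v x.
Proof.
move=> m0 Ux; apply: (ge_inf (TT_hlb x m0)); right; exists x => //.
by rewrite subrr normr0 mulr0 addr0.
Qed.

Lemma ee_mono m m' x : 0 <= m -> m <= m' -> ee m x <= ee m' x.
Proof.
move=> m0 mm; apply: lb_le_inf; first exact: TT_ne.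
move=> t [->|[a Ua ->]]; first by apply: ee_le_alpha.
apply: (le_trans (ge_inf (TT_hlb x m0) _)); first by right; exists a.
by rewrite lerD2l ler_wpM2r.
Qed.

Lemma ee_lip m x y : 0 <= m -> ee m x <= ee m y + m * `|x - y|.
Proof.
move=> m0; rewrite -lerBlDr; apply: lb_le_inf; first exact: TT_ne.
move=> t [->|[a Ua ->]].
  rewrite lerBlDr; apply: (le_trans (ee_le_alpha x m0)).
  by rewrite lerDl mulr_ge0.
rewrite lerBlDr; apply: (le_trans (ge_inf (TT_hlb x m0) _)).
  by right; exists a.
rewrite -addrA lerD2l -mulrDr ler_wpM2l //.
by rewrite [X in _ <= X]addrC; apply: ler_distD.
Qed.

Lemma ee_conv x : U x ->
  (forall e, 0 < e -> \forall y \near x, U y -> v x - e < v y) ->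
  forall e, 0 < e -> exists M : nat, v x - e <= ee M%:R x.
Proof.
move=> Ux vc e e0.
have /nbhs_ballP [eta eta0 Heta] := vc e e0.
have he : 0 <= (alpha *+ 2) / eta by rewrite divr_ge0 // ?ltW // mulrn_wgt0.
exists (Num.Def.archi_bound ((alpha *+ 2) / eta)).
set M := _%:R; have HM := archi_boundP he; fold M in HM.
apply: lb_le_inf; first exact: TT_ne.
have vxa : v x <= alpha by case/andP: (vb Ux).
move=> t [->|[a Ua ->]]; first by rewrite lerBlDr (le_trans vxa) // lerDl ltW.
have M0 : 0 <= M by rewrite ler0n.
have [xa|xa] := ltP `|x - a| eta.
  have : ball x eta a by rewrite -ball_normE /ball_ /=.
  move/Heta/(_ Ua) => /ltW h; apply: (le_trans h).
  by rewrite lerDl mulr_ge0.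
have /andP[va _] := vb Ua.
have h1 : alpha *+ 2 <= M * `|x - a|.
  apply: (le_trans _ (ler_wpM2l M0 xa)).
  by rewrite -ler_pdivrMr // ltW.
have := a0; rewrite mulr2n in h1; lra.
Qed.
End Core.
Lemma rVballE (R : realType) N (x y : 'rV[R]_N) e : 0 < e -> (ball x e y <-> forall i, `|x ord0 i - y ord0 i| < e).
Proof. move=> e0; rewrite /ball /= /mx_ball; split.
  by move=> [_ H] i; move: (H ord0 i).
move=> H; split => // i j; rewrite (ord1 i); exact: H.
Qed.
Definition wc (R : realType) N m (A : set 'rV[R]_N) (F : 'rV[R]_N -> 'rV[R]_m) :=
  forall x, A x -> forall e, 0 < e ->
  \forall y \near x, A y -> forall i, `|F x ord0 i - F y ord0 i| < e.
Lemma wcP (R : realType) N m (A : set 'rV[R]_N) (F : 'rV[R]_N -> 'rV[R]_m) :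
  {within A, continuous F} <-> wc A F.
Proof.
rewrite subspace_continuousP; split.
- move=> H x Ax e e0; have /cvg_ballP := H x Ax.
  move=> /(_ e e0) Hb; have : {near nbhs x, A `<=` ball (F x) e \o F} by exact: Hb.
  apply: filterS => y Hy Ay i.
  by have /(rVballE _ _ e0) := Hy Ay; apply.
- move=> H x Ax; apply/cvg_ballP => e e0 /=; rewrite /within /=.
  move: (H x Ax e e0); apply: filterS => y Hy Ay.
  by apply/(rVballE _ _ e0); apply: Hy.
Qed.

Lemma near_coord (R : realType) N (p : 'rV[R]_N) d : 0 < d ->
  \forall y \near p, forall i, `|p ord0 i - (y : 'rV[R]_N) ord0 i| < d.
Proof. by move=> d0; apply/nbhs_ballP; exists d => // y /(rVballE _ _ d0). Qed.

Lemma Kr_closed (R : realType) N (K : {set {set 'I_N}}) : closed (@realization R N K).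
Proof.
rewrite closedE => p; apply: contra_notP => nKp.
have [[i pi]|npos] := pselect (exists i, p ord0 i < 0).
  have d0 : 0 < - p ord0 i by rewrite oppr_gt0.
  move: (near_coord p d0); apply: filterS => y Hy [Hy0 _].
  have := Hy i; have := Hy0 i; rewrite ltr_norml; lra.
have pos : forall i, 0 <= p ord0 i.
  by move=> i; rewrite leNgt; apply/negP => hi; apply: npos; exists i.
have [s1|s1] := eqVneq (\sum_(i < N) p ord0 i) 1.
  have : \forall y \near p, forall i, p ord0 i != 0 -> (y : 'rV[R]_N) ord0 i != 0.
    apply: (@filter_forall 'rV[R]_N 'I_N (fun i (y : 'rV[R]_N) => p ord0 i != 0 -> y ord0 i != 0) (nbhs p) _) => i /=.
    have [pi0|pi0] := eqVneq (p ord0 i) 0.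
      by apply: nearW => y.
    have pd : 0 < `|p ord0 i| by rewrite normr_gt0.
    move: (near_coord p pd).
    apply: filterS => y Hy _; apply/eqP => yi0; have := Hy i.
    by rewrite yi0 subr0 ltxx.
  apply: filterS => y Hy [_ [_ [s sK Hs]]]; apply: nKp; split => //; split => //.
  by exists s => // i /Hy/Hs.
set D := `|\sum_(i < N) p ord0 i - 1|.
have D0 : 0 < D by rewrite normr_gt0 subr_eq0.
set d := D / N.+1%:R.
have d0 : 0 < d by rewrite divr_gt0.
move: (near_coord p d0); apply: filterS => y Hy [_ [sy _]].
have h1 : `|\sum_(i < N) p ord0 i - \sum_(i < N) y ord0 i| <= d *+ N.
  rewrite -sumrB; apply: le_trans (ler_norm_sum _ _ _) _.
  rewrite -[X in _ <= _ *+ X](card_ord N) -sumr_const.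
  by apply: ler_sum => i _; exact: ltW (Hy i).
have h2 : d *+ N.+1 = D by rewrite -mulr_natr divfK // pnatr_eq0.
rewrite sy -/D in h1 h2; rewrite mulrS in h2; move: h1 h2; lra.
Qed.

Lemma Kr_coord (R : realType) N (K : {set {set 'I_N}}) x :
  @realization R N K x -> forall i, 0 <= x ord0 i <= 1.
Proof.
move=> [pos [s1 _]] i; rewrite pos /= -s1 (bigD1 i) //= lerDl.
by apply: sumr_ge0 => j _.
Qed.

Lemma closed_near (R : realType) N (A : set 'rV[R]_N) p :
  closed A -> ~ A p -> \forall y \near p, ~ A y.
Proof. by rewrite closedE => /(_ p) H; apply: contra_notP. Qed.

Lemma U_compact (R : realType) N k (K : {set {set 'I_N}}) (g : 'rV[R]_N -> 'rV[R]_k)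
  (wg : wc (realization K) g) alpha : compact (Uset K g alpha).
Proof.
apply: bounded_closed_compact.
  exists 1; split; first exact: num_real.
  move=> M M1 x [Kx _] /=.
  have M0 : 0 < M by apply: lt_trans M1.
  have : ball (0 : 'rV[R]_N) M x.
    apply/(rVballE _ _ M0) => i; rewrite mxE sub0r normrN.
    have /andP[h1 h2] := Kr_coord Kx i.
    by rewrite ger0_norm // (le_lt_trans h2).
  by rewrite -ball_normE /ball_ /= sub0r normrN => /ltW.
rewrite closedE => p; apply: contra_notP => nUp.
have [Kp|nKp] := pselect (realization K p); last first.
  by move: (closed_near (@Kr_closed R N K) nKp); apply: filterS => y hy [].
have [[i pi]|] := pselect (exists i, - alpha < g p ord0 i); last first.
  move=> ni; exfalso; apply: nUp; split => // i.
  by rewrite leNgt; apply/negP => h; apply: ni; exists i.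
have d0 : 0 < g p ord0 i + alpha by rewrite -ltrBlDr sub0r.
move: (wg p Kp _ d0); apply: filterS => y Hy [Ky Uy].
have := Hy Ky i; have := Uy i; rewrite ltr_norml; lra.
Qed.

Lemma ee_cont (R : realType) N (U : set 'rV[R]_N) (v : 'rV[R]_N -> R) alpha
  (vb : forall a, U a -> -alpha <= v a <= alpha) (a0 : 0 < alpha) (m : R) (m0 : 0 <= m) x e :
  0 < e -> \forall y \near x, `|ee U v alpha m x - ee U v alpha m y| < e.
Proof.
move=> e0; set d := e / (m + 1).
have d0 : 0 < d by rewrite divr_gt0 // ltr_wpDl.
apply/nbhs_ballP; exists d => // y; rewrite -ball_normE /ball_ /= => hxy.
have h1 := ee_lip vb a0 x y m0; have h2 := ee_lip vb a0 y x m0.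
rewrite distrC in h2.
have h3 : m * `|x - y| <= m * d by rewrite ler_wpM2l // ltW.
have hd : d * m + d = e.
  by rewrite -[X in _ + X]mulr1 -mulrDr /d divfK // gt_eqF // ltr_wpDl.
have h4 : m * d < e by rewrite mulrC; lra.
rewrite ltr_norml; lra.
Qed.

Lemma approx (R : realType) N n (U : set 'rV[R]_N) (cU : compact U)
  (f h : 'rV[R]_N -> 'rV[R]_n) (wf : wc U f) (wh : wc U h) alpha (a0 : 0 < alpha)
  (hb : max_dist_le U h f alpha) (nz : forall x, U x -> h x != 0) :
  exists E : 'rV[R]_N -> 'rV[R]_n,
    (forall x e, 0 < e -> \forall y \near x, forall i, `|E x ord0 i - E y ord0 i| < e) /\
    (forall x i, `|E x ord0 i| <= alpha) /\ (forall x, U x -> f x + E x != 0).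
Proof.
pose v i a := h a ord0 i - f a ord0 i.
have vb : forall i a, U a -> -alpha <= v i a <= alpha.
  by move=> i a Ua; rewrite -ler_norml; apply: hb.
pose E (m : nat) x := \row_i ee U (v i) alpha m%:R x.
have Ecomp m x i : E m x ord0 i = ee U (v i) alpha m%:R x by rewrite mxE.
suff [m Hm] : exists m : nat, forall x, U x -> f x + E m x != 0.
  exists (E m); split; [|split] => //.
  - move=> x e e0.
    have H : forall i, \forall y \near x, `|E m x ord0 i - E m y ord0 i| < e.
      move=> i; have := ee_cont (vb i) a0 (ler0n _ m) x e0.
      by apply: filterS => y; rewrite !Ecomp.
    exact: filter_forall H.
  - by move=> x i; rewrite Ecomp ler_norml (ee_ge (vb i) a0) ?(ee_le_alpha (vb i) a0) // ler0n.
suff : \forall m \near \oo, U `<=` (fun x => f x + E m x != 0).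
  by move=> /filter_ex [m Hm]; exists m.
have cov := (near_covering_withinP U).2 ((compact_near_coveringP U).1 cU).
apply: cov => x Ux.
have [[j hj]|nj] := pselect (exists j, h x ord0 j != 0); last first.
  exfalso; apply: (negP (nz x Ux)); apply/eqP/rowP => j; rewrite mxE; apply/eqP.
  by apply/negPn/negP => hj; apply: nj; exists j.
set c := `|h x ord0 j|.
have c0 : 0 < c by rewrite normr_gt0.
have vc : forall e, 0 < e -> \forall y \near x, U y -> v j x - e < v j y.
  move=> e e0; have e2 : 0 < e / 2 by rewrite divr_gt0.
  move: (wh x Ux _ e2) (wf x Ux _ e2); apply: filterS2 => y h1 h2 Uy.
  have := h1 Uy j; have := h2 Uy j; rewrite /v !ltr_norml; lra.
have c6 : 0 < c / 6 by rewrite divr_gt0.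
have c4 : 0 < c / 4 by rewrite divr_gt0.
have c12 : 0 < c / 12 by rewrite divr_gt0.
have [M HM] := ee_conv (vb j) a0 Ux vc c6.
have Hh := wh x Ux _ c4.
have Hf := wf x Ux _ c12.
have He := ee_cont (vb j) a0 (ler0n _ M) x c12.
near=> y m => Uy.
have Mm : (M <= m)%N by near: m; exists M.
have h1 : U y -> forall i, `|h x ord0 i - h y ord0 i| < c / 4 by exact: (near Hh y).
have h2 : U y -> forall i, `|f x ord0 i - f y ord0 i| < c / 12 by exact: (near Hf y).
have h3 : `|ee U (v j) alpha M%:R x - ee U (v j) alpha M%:R y| < c / 12 by exact: (near He y).
move/(_ Uy j): h1 => h1; move/(_ Uy j): h2 => h2.
have Mm' : (M%:R <= m%:R :> R) by rewrite ler_nat.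
have h4 := ee_mono (vb j) a0 y (ler0n _ M) Mm'.
have h5 := ee_le_v (vb j) a0 (ler0n _ m) Uy.
apply/negP => /eqP E0.
have fe : f y ord0 j + ee U (v j) alpha m%:R y = 0.
  by have := congr1 (fun Z : 'rV[R]_n => Z ord0 j) E0; rewrite !mxE.
have tri : `|h x ord0 j| <= `|h x ord0 j - h y ord0 j| + `|h y ord0 j|.
  by rewrite -[X in `|X| <= _](subrK (h y ord0 j)) ler_normD.
have hy0 : 0 <= h y ord0 j.
  by move: h5 fe; rewrite /v; lra.
have hy1 : h y ord0 j < c * 7 / 12.
  move: h1 h2 h3 h4 h5 fe HM; rewrite /v !ltr_norml; lra.
rewrite (ger0_norm hy0) -/c in tri.
move: h1 tri hy1 c0; rewrite -/c; lra.
Unshelve. all: end_near.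
Qed.

Theorem lemma3p7 (R : realType) (N n k : nat) (K : {set {set 'I_N}})
  (HK : is_simplicial_complex K)
  (f : 'rV[R]_N -> 'rV[R]_n) (g : 'rV[R]_N -> 'rV[R]_k)
  (hf : {within realization K, continuous f})
  (hg : {within realization K, continuous g})
  (alpha : R) (halpha : 0 < alpha) :
  (forall (ft : 'rV[R]_N -> 'rV[R]_n) (gt : 'rV[R]_N -> 'rV[R]_k),
      system_perturbation K alpha f ft g gt -> satisfiable K ft gt)
  <->
  (forall h : 'rV[R]_N -> 'rV[R]_n,
      fun_perturbation (Uset K g alpha) alpha f h ->
      exists2 x, Uset K g alpha x & h x = 0).
Proof.
have UK : Uset K g alpha `<=` realization K by move=> x [].
split.
- move=> H h [hc hb]; apply: contrapT => nr.
  have nz : forall x, Uset K g alpha x -> h x != 0.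
    by move=> x Ux; apply/eqP => hx; apply: nr; exists x.
  have wfU : wc (Uset K g alpha) f.
    by apply/wcP; exact: (continuous_subspaceW UK hf).
  have whU : wc (Uset K g alpha) h by apply/wcP.
  have wcKf : wc (realization K) f by apply/wcP.
  have wcKg : wc (realization K) g by apply/wcP.
  have [E [Ec [Eb Enz]]] := approx (U_compact (alpha := alpha) wcKg) wfU whU halpha hb nz.
  pose ft x := f x + E x; pose gt x := g x + const_mx alpha.
  have : satisfiable K ft gt.
    apply: H; split; [|split; [|split]].
    + apply/wcP => x Kx e e0; have e2 : 0 < e / 2 by rewrite divr_gt0.
      move: (wcKf x Kx _ e2) (Ec x _ e2); apply: filterS2 => y h1 h2 Ky i.
      have := h1 Ky i; have := h2 i; rewrite /ft !mxE !ltr_norml; lra.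
    + apply/wcP => x Kx e e0; move: (wcKg x Kx _ e0); apply: filterS => y h1 Ky i.
      have := h1 Ky i; rewrite /gt !mxE !ltr_norml; lra.
    + move=> x Kx i; have := Eb x i; rewrite /ft !mxE !ler_norml; lra.
    + move=> x Kx i; have := halpha; rewrite /gt !mxE !ler_norml; lra.
  case=> x Kx [ftx gtx].
  have Ux : Uset K g alpha x.
    by split => // i; have := gtx i; rewrite /gt !mxE; lra.
  by move: (Enz x Ux); rewrite /ft in ftx; rewrite ftx eqxx.
- move=> H ft gt [fc [gc [fb gb]]].
  have := H ft (conj (continuous_subspaceW UK fc) (fun x Ux => fb x (UK x Ux))).
  case=> x [Kx Ux] ftx; exists x => //; split => // i.
  have := gb x Kx i; have := Ux i; rewrite ler_norml; lra.
Qed.
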